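(* Let $n\in\mathbb{Z}$ and let $d:\mathcal{A}\to A$ be an $n$-covariant derivation. Then there exists a function $\beta:\mathbb{Z}\to\mathbb{C}$ with convergent increments, unique if $n\ne0$ and unique modulo an additive constant if $n=0$, such that $d(a)=[U^n\beta(\mathbb{K}),a]$ for all $a\in\mathcal{A}$.
   Context: Let $\{E_k\}$ be the canonical basis of $\ell^2(\mathbb{Z})$, $UE_k=E_{k+1}$, $\mathbb{K}E_k=kE_k$, $a(\mathbb{K})E_k=a(k)E_k$. $A$ is the C$^*$-algebra generated by $U$ and all $a(\mathbb{K})$ with $a$ having finite limits at $\pm\infty$; $\mathcal{A}$ is the algebra of finite sums $\sum_nU^na_n(\mathbb{K})$ with each $a_n$ eventually constant (constant on $k\ge k_0$ and on $k\le-k_0$ for some $k_0$). For $\varphi\in[0,2\pi)$ the rotation automorphism is $\rho_\varphi(a)=e^{i\varphi\mathbb{K}}ae^{-i\varphi\mathbb{K}}$ (it preserves $A$ and $\mathcal{A}$ and fixes diagonal operators). A derivation $d:\mathcal{A}\to A$ (linear, Leibniz) is $n$-covariant if $d(\rho_\varphi(a))=e^{-in\varphi}\rho_\varphi(d(a))$ for all $a\in\mathcal{A}$, $\varphi$. A function $\beta$ has convergent increments if $k\mapsto\beta(k)-\beta(k-1)$ has finite limits as $k\to\pm\infty$. *)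

(* Defs.v *)
From HB Require Import structures.
From mathcomp Require Import all_boot all_order all_algebra.
From mathcomp Require Import boolp classical_sets reals trigo Rstruct.
From mathcomp.real_closed Require Import complex.
Set Implicit Arguments. Unset Strict Implicit. Unset Printing Implicit Defensive.
Import Order.TTheory GRing.Theory Num.Theory.
Local Open Scope ring_scope.
Local Open Scope complex_scope.

Notation Rr := Rdefinitions.R.
Notation C := (Rr[i]).

(** Operators on l^2(Z) are represented by their matrices in the canonical
    basis {E_k}: M i j = < E_i , M E_j >. *)
Definition mat := int -> int -> C.

Definition addm (M N : mat) : mat := fun i j => M i j + N i j.
Definition oppm (M : mat) : mat := fun i j => - M i j.
Definition subm (M N : mat) : mat := fun i j => M i j - N i j.
Definition scalem (c : C) (M : mat) : mat := fun i j => c * M i j.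

Definition zwin (N : nat) : seq int :=
  [seq (m%:Z - N%:Z) | m <- iota 0 (N.*2).+1].

(** Matrix product: (M N)_{ij} = sum_k M_{ik} N_{kj}, defined as the eventual
    value of the symmetric partial sums (these are eventually constant whenever
    one factor is banded, which is the only case used below). *)
Definition mulm (M N : mat) : mat := fun i j =>
  xget 0 (fun c : C => exists N0 : nat, forall n : nat, (N0 <= n)%N ->
            \sum_(k <- zwin n) M i k * N k j = c).

Definition commm (M N : mat) : mat := subm (mulm M N) (mulm N M).

(** U^n a(K) : E_j |-> a(j) E_{j+n} *)
Definition shiftdiag (n : int) (a : int -> C) : mat :=
  fun i j => if i == j + n then a j else 0.

Definition polym (s : seq (int * (int -> C))) : mat :=
  fun i j => \sum_(p <- s) shiftdiag p.1 p.2 i j.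

Definition has_limits (a : int -> C) : Prop :=
  exists lp lm : C, forall eps : Rr, 0 < eps -> exists N : int,
    forall k : int, (N <= k -> `|a k - lp| <= eps%:C) /\
                    (k <= - N -> `|a k - lm| <= eps%:C).

Definition eventually_const (a : int -> C) : Prop :=
  exists k0 : int, forall k : int, (k0 <= k -> a k = a k0) /\
                                   (k <= - k0 -> a k = a (- k0)).

Definition in_calA (M : mat) : Prop :=
  exists s : seq (int * (int -> C)),
    all (fun p => `[< eventually_const p.2 >]) s /\ M = polym s.

Definition in_polyA (M : mat) : Prop :=
  exists s : seq (int * (int -> C)),
    all (fun p => `[< has_limits p.2 >]) s /\ M = polym s.

(** ||M|| <= c  (operator norm on l^2(Z)), tested on finitely supported
    vectors x (supported on s) and finite sets t of output coordinates. *)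
Definition norm_le (M : mat) (c : Rr) : Prop :=
  forall (s t : seq int) (x : int -> C), uniq s -> uniq t ->
    \sum_(i <- t) `| \sum_(j <- s) M i j * x j | ^+ 2
      <= (c ^+ 2)%:C * \sum_(j <- s) `| x j | ^+ 2.

Definition in_A (M : mat) : Prop :=
  forall eps : Rr, 0 < eps -> exists P : mat, in_polyA P /\ norm_le (subm M P) eps.

Definition expi (phi : Rr) : C := Complex (cos phi) (sin phi).

(** rho_phi(M) = e^{i phi K} M e^{-i phi K} : entries e^{i phi (i - j)} M_{ij} *)
Definition rho (phi : Rr) (M : mat) : mat :=
  fun i j => expi phi ^ (i - j) * M i j.

Definition is_derivation (d : mat -> mat) : Prop :=
  (forall a, in_calA a -> in_A (d a)) /\
  (forall a b, in_calA a -> in_calA b -> d (addm a b) = addm (d a) (d b)) /\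
  (forall (c : C) a, in_calA a -> d (scalem c a) = scalem c (d a)) /\
  (forall a b, in_calA a -> in_calA b ->
     d (mulm a b) = addm (mulm (d a) b) (mulm a (d b))).

Definition n_covariant (n : int) (d : mat -> mat) : Prop :=
  forall a, in_calA a -> forall phi : Rr, 0 <= phi < 2 * pi ->
    d (rho phi a) = scalem (expi phi ^ (- n)) (rho phi (d a)).

Definition conv_increments (beta : int -> C) : Prop :=
  has_limits (fun k => beta k - beta (k - 1)).

(* Main.v *)
Require Import Defs.
From HB Require Import structures.
From mathcomp Require Import all_boot all_order all_algebra.
From mathcomp Require Import boolp classical_sets reals trigo Rstruct.
From mathcomp.real_closed Require Import complex.
From mathcomp Require Import zify ring lra.
Import Order.TTheory GRing.Theory Num.Theory.
Local Open Scope ring_scope.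
Local Open Scope complex_scope.

Lemma zwin_mem (x : int) (N : nat) : (`|x| <= N)%N -> x \in zwin N.
Proof.
move=> h; apply/mapP; exists (absz (x + N%:Z)).
  rewrite mem_iota add0n; lia.
lia.
Qed.

Lemma sum_if_eq (s : seq int) (x : int) (f : int -> C) : uniq s ->
  \sum_(k <- s) (if k == x then f k else 0) = if x \in s then f x else 0.
Proof.
elim: s => [|y s IH]; first by rewrite big_nil.
rewrite /=.
case/andP=> ys us; rewrite big_cons IH // in_cons.
case: (eqVneq y x) => [<-|ne] /=.
  by rewrite (negbTE ys) addr0.
by rewrite add0r.
Qed.

Lemma zwin_uniq N : uniq (zwin N).
Proof.
rewrite map_inj_uniq ?iota_uniq // => a b /= h; lia.
Qed.

Lemma mulm_eq (M N : mat) i j (c : C) (N0 : nat) :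
  (forall n, (N0 <= n)%N -> \sum_(k <- zwin n) M i k * N k j = c) ->
  mulm M N i j = c.
Proof.
move=> H; rewrite /mulm.
case: xgetP => [y _ [N1 H1]|]; last by move=> /(_ c); case; exists N0.
by rewrite -(H1 (maxn N0 N1)) ?leq_maxr // H ?leq_maxl.
Qed.

Lemma mulm_sdr (M : mat) m f i j :
  mulm M (shiftdiag m f) i j = M i (j + m) * f j.
Proof.
apply: (@mulm_eq _ _ _ _ _ (absz (j + m))) => n hn.
rewrite (eq_bigr (fun k => if k == j + m then M i k * f j else 0)); last first.
  by move=> k _; rewrite /shiftdiag; case: eqP => _; rewrite ?mulr0.
by rewrite sum_if_eq ?zwin_uniq // zwin_mem.
Qed.

Lemma mulm_sdl (M : mat) m f i j :
  mulm (shiftdiag m f) M i j = f (i - m) * M (i - m) j.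
Proof.
apply: (@mulm_eq _ _ _ _ _ (absz (i - m))) => n hn.
rewrite (eq_bigr (fun k => if k == i - m then f (i - m) * M (i - m) j else 0)); last first.
  move=> k _; rewrite /shiftdiag; case: (eqVneq k (i - m)) => [->|ne].
    by rewrite subrK eqxx.
  case: eqP => [e|_]; last by rewrite mul0r.
  by case/eqP: ne; rewrite e addrK.
by rewrite sum_if_eq ?zwin_uniq // zwin_mem.
Qed.

Lemma shiftdiag_ext m m' f g : m = m' -> f =1 g -> shiftdiag m f = shiftdiag m' g.
Proof. by move=> <- e; apply/funext=> i; apply/funext=> j; rewrite /shiftdiag e. Qed.

Lemma mulm_sd m f l g :
  mulm (shiftdiag m f) (shiftdiag l g) = shiftdiag (m + l) (fun j => f (j + l) * g j).
Proof.
apply/funext=> i; apply/funext=> j; rewrite mulm_sdr /shiftdiag.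
by rewrite (addrC m l) addrA; case: ifP; rewrite ?mul0r.
Qed.

Lemma addm_sd m f g : addm (shiftdiag m f) (shiftdiag m g) = shiftdiag m (fun j => f j + g j).
Proof. apply/funext=> i; apply/funext=> j; by rewrite /addm /shiftdiag; case: ifP; rewrite ?addr0. Qed.

Lemma sd_at m f j : shiftdiag m f (j + m) j = f j.
Proof. by rewrite /shiftdiag eqxx. Qed.

Lemma sd_inj m f g : shiftdiag m f = shiftdiag m g -> f = g.
Proof. by move=> e; apply/funext=> j; rewrite -(sd_at m f) -(sd_at m g) e. Qed.

Lemma expiD x y : expi (x + y) = expi x * expi y.
Proof. rewrite /expi trigo.cosD trigo.sinD /=; congr Complex; ring. Qed.

Lemma expi0 : expi 0 = 1.
Proof. by rewrite /expi cos0 sin0. Qed.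

Lemma expi_nat x (p : nat) : expi x ^+ p = expi (p%:R * x).
Proof.
elim: p => [|p IH]; first by rewrite expr0 mul0r expi0.
by rewrite exprS IH -expiD; congr expi; rewrite -addn1 natrD; ring.
Qed.

Lemma expi_neq0 x : expi x != 0.
Proof.
apply/eqP=> h; have : expi x * expi (- x) = 1 by rewrite -expiD subrr expi0.
by rewrite h mul0r => /eqP; rewrite eq_sym oner_eq0.
Qed.

Lemma expi_pi : expi pi = -1.
Proof. rewrite /expi cospi sinpi; apply/eqP; rewrite eq_complex /= oppr0 !eqxx //. Qed.

Lemma expi_pow_ne1 (k : int) : k != 0 ->
  exists phi, 0 <= phi < 2 * pi /\ expi phi ^ k != 1.
Proof.
move=> k0; have kp : (0 < absz k)%N by rewrite absz_gt0.
have kR : (absz k)%:R != 0 :> Rr by rewrite pnatr_eq0 -lt0n.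
exists (pi / (absz k)%:R); split.
  have pg := pi_gt0 Rr.
  apply/andP; split; first by rewrite divr_ge0 // ltW.
  apply: (@le_lt_trans _ _ pi); last by lra.
  rewrite ler_pdivrMr ?ltr0n //.
  have h1 : 1 <= (absz k)%:R :> Rr by rewrite ler1n.
  nra.
have e : expi (pi / (absz k)%:R) ^+ absz k = -1.
  by rewrite expi_nat mulrC divfK // expi_pi.
have n1 : (-1 : C) != 1.
  rewrite eq_sym -subr_eq0 opprK; apply/negP => /eqP h2.
  have : (2%:R : C) == 0 by rewrite mulr2n h2.
  by rewrite pnatr_eq0.
case: k k0 kp kR e => p /= k0 kp kR e.
  by rewrite -exprnP e.
by rewrite NegzE -exprnN e invrN1.
Qed.

Lemma support0 (D : mat) (m n : int) :
  (forall phi : Rr, 0 <= phi < 2 * pi ->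
     scalem (expi phi ^ m) D = scalem (expi phi ^ (- n)) (rho phi D)) ->
  forall i j, i - j != n + m -> D i j = 0.
Proof.
move=> H i j ne.
have k0 : i - j - n - m != 0.
  by apply: contra ne; rewrite -addrA -opprD subr_eq0.
have [phi [hphi hk]] := expi_pow_ne1 _ k0.
have := congr1 (fun M => M i j) (H phi hphi); rewrite /scalem /rho /= => h.
apply/eqP; apply: contraNT hk => Dn.
have e : expi phi ^ m = expi phi ^ (- n) * expi phi ^ (i - j).
  by apply: (mulIf Dn); rewrite h mulrA.
have ne0 := expi_neq0 phi.
rewrite (expfzDr (i - j - n) (- m) ne0) (expfzDr (i - j) (- n) ne0) mulrC (mulrC (_ ^ (i - j))) -e.
by rewrite -expfzDr // addNr expr0z.
Qed.

Lemma calA_sd m f : eventually_const f -> in_calA (shiftdiag m f).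
Proof.
move=> hf; exists [:: (m, f)]; split; first by rewrite /= andbT; apply/asboolP.
apply/funext=> i; apply/funext=> j; by rewrite /polym big_cons big_nil addr0.
Qed.

Lemma rho_sd phi m f : rho phi (shiftdiag m f) = scalem (expi phi ^ m) (shiftdiag m f).
Proof.
apply/funext=> i; apply/funext=> j; rewrite /rho /scalem /shiftdiag.
case: eqP => [->|_]; last by rewrite !mulr0.
by rewrite (addrC j m) addrK.
Qed.

Lemma d_sd n d : is_derivation d -> n_covariant n d ->
  forall m f, eventually_const f ->
  d (shiftdiag m f) = shiftdiag (n + m) (fun j => d (shiftdiag m f) (j + (n + m)) j).
Proof.
move=> [_ [_ [Hs _]]] Hc m f hf.
have S : forall phi : Rr, 0 <= phi < 2 * pi ->
    scalem (expi phi ^ m) (d (shiftdiag m f)) =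
    scalem (expi phi ^ (- n)) (rho phi (d (shiftdiag m f))).
  move=> phi hphi; rewrite -Hs; last exact: calA_sd.
  by rewrite -rho_sd Hc //; exact: calA_sd.
apply/funext=> i; apply/funext=> j.
case: (eqVneq i (j + (n + m))) => [->|ne]; first by rewrite sd_at.
rewrite {2}/shiftdiag (negbTE ne); apply: (@support0 _ m n S i j).
by rewrite subr_eq addrC.
Qed.

Lemma normC_le (a b e : Rr) : 0 <= e ->
  (`|Complex a b| <= e%:C) = (a ^+ 2 + b ^+ 2 <= e ^+ 2).
Proof.
move=> e0; rewrite normc_def /= lecR.
rewrite -(@ler_pXn2r _ 2) ?nnegrE ?sqrtr_ge0 // sqr_sqrtr // addr_ge0 // sqr_ge0 //.
Qed.

Lemma entry_bound (M : mat) (c : Rr) : 0 <= c -> norm_le M c ->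
  forall i j, `|M i j| <= c%:C.
Proof.
move=> c0 H i j; have := H [:: j] [:: i] (fun _ => 1) erefl erefl.
rewrite !big_seq1 mulr1 normr1 expr1n mulr1 rmorphXn /=.
rewrite ler_pXn2r // ?nnegrE ?ler0c //.
Qed.

Lemma R_cauchy (u : nat -> Rr) :
  (forall e : Rr, 0 < e -> exists N, forall p q, (N <= p)%N -> (N <= q)%N ->
      (u p - u q) ^+ 2 <= e ^+ 2) ->
  exists l, forall e : Rr, 0 < e -> exists N, forall p, (N <= p)%N ->
      (u p - l) ^+ 2 <= e ^+ 2.
Proof.
move=> H.
have Cc : Rseries.Cauchy_crit u.
  move=> eps /RltP he.
  rewrite R0E in he; have he2 : 0 < eps / 2 by lra.
  have [N HN] := H _ he2; exists N => p q /ssrnat.leP hp /ssrnat.leP hq.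
  have := HN p q hp hq => h.
  rewrite !expr2 in h; apply: Rbasic_fun.Rabs_def1; apply/RltP; rewrite ?RminusE ?RoppE; nra.
have [l Hl] := Rcomplete.R_complete u Cc.
exists l => e he; have [N HN] := Hl e ltac:(apply/RltP; rewrite R0E; exact: he).

exists N => p /ssrnat.leP hp; have [/RltP h1 /RltP h2] := Rbasic_fun.Rabs_def2 _ _ (HN p hp).
rewrite /Rfunctions.Rdist ?RminusE ?RoppE in h1 h2; rewrite !expr2; nra.
Qed.

Lemma subC_comp (z w : C) : z - w = Complex (complex.Re z - complex.Re w) (complex.Im z - complex.Im w).
Proof. by case: z => a b; case: w => c d. Qed.

Lemma C_complete (u : nat -> C) :
  (forall e : Rr, 0 < e -> exists N, forall p q, (N <= p)%N -> (N <= q)%N ->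
      `|u p - u q| <= e%:C) ->
  exists l, forall e : Rr, 0 < e -> exists N, forall p, (N <= p)%N ->
      `|u p - l| <= e%:C.
Proof.
move=> H.
have [la Ha] : exists l, forall e : Rr, 0 < e -> exists N, forall p, (N <= p)%N ->
      (complex.Re (u p) - l) ^+ 2 <= e ^+ 2.
  apply: R_cauchy => e1 he1; have [N HN] := H e1 he1; exists N => p q hp hq.
  have := HN p q hp hq; rewrite subC_comp normC_le ?(ltW he1) //.
  have := sqr_ge0 (complex.Im (u p) - complex.Im (u q)); lra.
have [lb Hb] : exists l, forall e : Rr, 0 < e -> exists N, forall p, (N <= p)%N ->
      (complex.Im (u p) - l) ^+ 2 <= e ^+ 2.
  apply: R_cauchy => e1 he1; have [N HN] := H e1 he1; exists N => p q hp hq.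
  have := HN p q hp hq; rewrite subC_comp normC_le ?(ltW he1) //.
  have := sqr_ge0 (complex.Re (u p) - complex.Re (u q)); lra.
exists (Complex la lb) => e he.
have he2 : 0 < e / 2 by lra.
have [Na HNa] := Ha _ he2; have [Nb HNb] := Hb _ he2.
exists (maxn Na Nb) => p hp.
have := HNa p (leq_trans (leq_maxl _ _) hp).
have := HNb p (leq_trans (leq_maxr _ _) hp).
rewrite subC_comp normC_le ?(ltW he) //= => h1 h2.
nra.
Qed.

Definition approx (g : int -> C) := forall e : Rr, 0 < e ->
  exists h, has_limits h /\ forall k, `|g k - h k| <= e%:C.

Lemma approx_cauchy g : approx g -> forall e : Rr, 0 < e ->
  exists N : nat, forall p q : nat, (N <= p)%N -> (N <= q)%N -> `|g p - g q| <= e%:C.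
Proof.
move=> Ha e he; have he4 : 0 < e / 4 by lra.
have [h [[lp [lm Hh]] Hg]] := Ha _ he4; have [N0 HN0] := Hh _ he4.
exists (absz N0) => p q hp hq.
have hp' : N0 <= p by lia.
have hq' : N0 <= q by lia.
have b1 := Hg p; have b2 := (HN0 p).1 hp'.
have b3 : `|lp - h q| <= (e / 4)%:C by rewrite distrC; exact: (HN0 q).1 hq'.
have b4 : `|h q - g q| <= (e / 4)%:C by rewrite distrC; exact: Hg q.
have -> : g p - g q = (g p - h p) + (h p - lp) + (lp - h q) + (h q - g q) by ring.
apply: (le_trans (ler_normD _ _)).
apply: (le_trans (lerD (le_trans (ler_normD _ _) (lerD (le_trans (ler_normD _ _) (lerD b1 b2)) b3)) b4)).
rewrite -!rmorphD /= lecR; lra.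
Qed.

Lemma approx_neg g : approx g -> approx (fun k => g (- k)).
Proof.
move=> Ha e he; have [h [[lp [lm Hh]] Hg]] := Ha _ he.
exists (fun k => h (- k)); split => [|k]; last exact: Hg.
exists lm, lp => eps heps; have [N HN] := Hh _ heps; exists N => k; split => hk.
  by apply: (HN (- k)).2; lia.
by apply: (HN (- k)).1; lia.
Qed.

Lemma approx_limits g : approx g -> has_limits g.
Proof.
move=> Ha.
have [lp Hp] := C_complete (fun p : nat => g p) (approx_cauchy _ Ha).
have [lm Hm] := C_complete (fun p : nat => g (- (p%:Z))) (approx_cauchy _ (approx_neg _ Ha)).
exists lp, lm => e he; have [Np HNp] := Hp e he; have [Nm HNm] := Hm e he.
exists (Posz (Np + Nm)) => k; split => hk.
  have ek : Posz (absz k) = k by lia.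
  by have := HNp (absz k) ltac:(lia); rewrite ek.
have ek : - Posz (absz k) = k by lia.
by have := HNm (absz k) ltac:(lia); rewrite /= ek.
Qed.

Lemma has_limits_const (c : C) : has_limits (fun _ => c).
Proof.
exists c, c => e he; exists 0 => k; by rewrite subrr normr0 ler0c (ltW he).
Qed.

Lemma has_limits_add f g : has_limits f -> has_limits g -> has_limits (fun k => f k + g k).
Proof.
move=> [lf [mf Hf]] [lg [mg Hg]]; exists (lf + lg), (mf + mg) => e he.
have he2 : 0 < e / 2 by lra.
have [N1 HN1] := Hf _ he2; have [N2 HN2] := Hg _ he2.
have ee : (e / 2)%:C + (e / 2)%:C = e%:C by rewrite -rmorphD /=; congr (_%:C); lra.
exists (Posz (absz N1 + absz N2)) => k; split => hk.
  have -> : f k + g k - (lf + lg) = (f k - lf) + (g k - lg) by ring.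
  rewrite -ee; apply: (le_trans (ler_normD _ _)); apply: lerD.
    by apply: (HN1 k).1; lia.
  by apply: (HN2 k).1; lia.
have -> : f k + g k - (mf + mg) = (f k - mf) + (g k - mg) by ring.
rewrite -ee; apply: (le_trans (ler_normD _ _)); apply: lerD.
  by apply: (HN1 k).2; lia.
by apply: (HN2 k).2; lia.
Qed.

Lemma has_limits_shift f : has_limits f -> has_limits (fun k => f (k - 1)).
Proof.
move=> [lp [lm H]]; exists lp, lm => e he; have [N HN] := H e he.
exists (Posz (absz N).+1) => k; split => hk.
  by apply: (HN _).1; lia.
by apply: (HN _).2; lia.
Qed.

Lemma polym_diag s m : all (fun p => `[< has_limits p.2 >]) s ->
  has_limits (fun k => polym s (k + m) k).
Proof.
elim: s => [|p s IH] /=.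
  move=> _; have -> : (fun k => polym [::] (k + m) k) = fun _ => 0.
    by apply/funext => k; rewrite /polym big_nil.
  exact: has_limits_const.
case/andP => /asboolP hp hs.
have -> : (fun k => polym (p :: s) (k + m) k) =
    fun k => (if m == p.1 then p.2 k else 0) + polym s (k + m) k.
  by apply/funext => k; rewrite /polym big_cons /shiftdiag (inj_eq (addrI k)).
apply: has_limits_add (IH hs).
by case: eqP => _ //; exact: has_limits_const.
Qed.

Lemma inA_approx m g : in_A (shiftdiag m g) -> approx g.
Proof.
move=> HA e he; have [P [[s [hs ->]] HP]] := HA e he.
exists (fun k => polym s (k + m) k); split; first exact: polym_diag.
move=> k; have := entry_bound _ _ (ltW he) HP (k + m) k.
by rewrite /subm /shiftdiag eqxx.
Qed.

Lemma inA_limits m g : in_A (shiftdiag m g) -> has_limits g.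
Proof. by move=> h; apply: approx_limits; apply: inA_approx h. Qed.

Definition dc (n : int) (d : mat -> mat) (m : int) (f : int -> C) (j : int) : C :=
  d (shiftdiag m f) (j + (n + m)) j.

Lemma d_sd' n d : is_derivation d -> n_covariant n d ->
  forall m f, eventually_const f -> d (shiftdiag m f) = shiftdiag (n + m) (dc n d m f).
Proof. exact: d_sd. Qed.

Definition delta (j : int) : int -> C := fun k => (k == j)%:R.
Definition one : int -> C := fun _ => 1.

Lemma ec_delta j : eventually_const (delta j).
Proof.
exists (Posz (absz j).+1) => k; rewrite /delta; split => hk.
  have -> : (k == j) = false by apply/negbTE/eqP; lia.
  have -> : (Posz (absz j).+1 == j) = false by apply/negbTE/eqP; lia.
  done.
have -> : (k == j) = false by apply/negbTE/eqP; lia.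
have -> : (- Posz (absz j).+1 == j) = false by apply/negbTE/eqP; lia.
done.
Qed.

Lemma ec_one : eventually_const one.
Proof. by exists 0. Qed.

Lemma sd_eval m f i j : shiftdiag m f i j = if i == j + m then f j else 0.
Proof. by []. Qed.

Lemma F1 n d : is_derivation d -> n_covariant n d ->
  forall a, eventually_const a -> forall j,
  dc n d 0 a j = dc n d 0 (delta j) j * (a j - a (j + n)).
Proof.
move=> Hd Hc a ha j; have [_ [_ [Hs Hm]]] := Hd.
have e1 : mulm (shiftdiag 0 a) (shiftdiag 0 (delta j)) = scalem (a j) (shiftdiag 0 (delta j)).
  rewrite mulm_sd; apply/funext=> i; apply/funext=> k; rewrite /scalem !sd_eval /delta !addr0.
  by case: (eqVneq k j) => [->|kj]; case: ifP => _; rewrite /= ?mulr1 ?mulr0.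
have := Hm _ _ (calA_sd 0 _ ha) (calA_sd 0 _ (ec_delta j)).
rewrite e1 Hs; last exact: calA_sd _ _ (ec_delta j).
rewrite (d_sd' _ _ Hd Hc _ _ (ec_delta j)) (d_sd' _ _ Hd Hc _ _ ha) !mulm_sd.
move/(congr1 (fun M => M (j + n) j)).
rewrite /addm /scalem !sd_eval /= !addr0 ?add0r eqxx /delta eqxx mulr1 => h.
apply: (addIr (a (j + n) * dc n d 0 (delta j) j)); rewrite -h; ring.
Qed.

Lemma F2 n d : is_derivation d -> n_covariant n d -> n != 0 -> forall j,
  dc n d 1 one j = dc n d 0 (delta (j + 1)) (j + 1) - dc n d 0 (delta j) j.
Proof.
move=> Hd Hc n0 j; have [_ [_ [Hs Hm]]] := Hd.
have e1 : mulm (shiftdiag 1 one) (shiftdiag 0 (delta j)) =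
          mulm (shiftdiag 0 (delta (j + 1))) (shiftdiag 1 one).
  rewrite !mulm_sd; apply: shiftdiag_ext; first by rewrite addr0 add0r.
  by move=> k /=; rewrite /one /delta mul1r mulr1 (inj_eq (addIr 1)).
have := congr1 d e1.
rewrite (Hm _ _ (calA_sd 1 _ ec_one) (calA_sd 0 _ (ec_delta j))).
rewrite (Hm _ _ (calA_sd 0 _ (ec_delta (j + 1))) (calA_sd 1 _ ec_one)).
rewrite (d_sd' _ _ Hd Hc _ _ (ec_delta j)) (d_sd' _ _ Hd Hc _ _ (ec_delta (j + 1))).
rewrite (d_sd' _ _ Hd Hc _ _ ec_one) !mulm_sd.
move/(congr1 (fun M => M (j + (n + 1)) j)).
rewrite /addm !sd_eval /= !addr0 ?add0r (addrC 1 n) eqxx /delta /one eqxx.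
have -> : (j + (n + 1) == j + 1) = false.
  by apply/negbTE/eqP => e; move/eqP: n0; apply; lia.
rewrite /= mulr1 mul1r mulr1 mul0r addr0 => h.
rewrite -h; ring.
Qed.

Lemma F3 n d : is_derivation d -> n_covariant n d -> forall j,
  dc n d (-1) one j = - dc n d 1 one (j - 1).
Proof.
move=> Hd Hc j; have [_ [_ [Hs Hm]]] := Hd.
have e1 : mulm (shiftdiag 1 one) (shiftdiag (-1) one) = shiftdiag 0 one.
  rewrite !mulm_sd; apply: shiftdiag_ext; first by rewrite subrr.
  by move=> k /=; rewrite /one mulr1.
have := congr1 d e1.
rewrite (Hm _ _ (calA_sd 1 _ ec_one) (calA_sd (-1) _ ec_one)).
rewrite !(d_sd' _ _ Hd Hc _ _ ec_one) !mulm_sd.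
move/(congr1 (fun M => M (j + n) j)).
have e2 : n + 1 - 1 = n by ring.
have e3 : 1 + (n - 1) = n by ring.
rewrite /addm !sd_eval /= !addr0 e2 e3 eqxx.
rewrite (F1 _ _ Hd Hc _ ec_one) /one subrr mulr0 mulr1 mul1r => h.
by move/eqP: h; rewrite addrC addr_eq0 => /eqP.
Qed.

Definition anti (g : int -> C) (k : int) : C :=
  match k with
  | Posz p => \sum_(i < p) g (Posz i)
  | Negz p => - \sum_(i < p.+1) g (- (Posz i.+1))
  end.

Lemma antiS g k : anti g (k + 1) = anti g k + g k.
Proof.
case: k => p.
  have -> : Posz p + 1 = Posz p.+1 by rewrite -addn1 PoszD.
  by rewrite /= big_ord_recr.
case: p => [|p].
  have -> : Negz 0 + 1 = Posz 0 by [].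
  rewrite /= big_ord_recr big_ord0 /= add0r addNr.
  by rewrite big_ord0.
have -> : Negz p.+1 + 1 = Negz p by rewrite !NegzE; lia.
rewrite /= (big_ord_recr p.+1) /=.
have -> : (- Posz p.+2) = Negz p.+1 by rewrite NegzE.
by rewrite opprD -addrA addNr addr0.
Qed.

Lemma int_ind3 (P : int -> Prop) : P 0 -> (forall m, P m -> P (m + 1)) ->
  (forall m, P m -> P (m - 1)) -> forall m, P m.
Proof.
move=> P0 PS PP [] p.
  elim: p => [//|p IH].
  have -> : Posz p.+1 = Posz p + 1 by rewrite -addn1 PoszD.
  exact: PS.
elim: p => [|p IH].
  have -> : Negz 0 = 0 - 1 by [].
  exact: PP.
have -> : Negz p.+1 = Negz p - 1 by rewrite !NegzE; lia.
exact: PP.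
Qed.

Definition beta n d : int -> C :=
  if n == 0 then anti (fun j => dc n d 1 one j) else (fun j => dc n d 0 (delta j) j).

Lemma beta_F1 n d : is_derivation d -> n_covariant n d ->
  forall a, eventually_const a -> forall j,
  dc n d 0 a j = beta n d j * (a j - a (j + n)).
Proof.
move=> Hd Hc a ha j; rewrite (F1 _ _ Hd Hc _ ha) /beta.
case: (eqVneq n 0) => [->|n0]; first by rewrite addr0 subrr !mulr0.
done.
Qed.

Lemma beta_F2 n d : is_derivation d -> n_covariant n d -> forall j,
  dc n d 1 one j = beta n d (j + 1) - beta n d j.
Proof.
move=> Hd Hc j; rewrite /beta.
case: (eqVneq n 0) => [->|n0]; last exact: F2.
by rewrite antiS; ring.
Qed.

Lemma addP0 (k : int) : k + Posz 0 = k. Proof. exact: addr0. Qed.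

Lemma dU n d : is_derivation d -> n_covariant n d -> forall m,
  d (shiftdiag m one) = shiftdiag (n + m) (fun j => beta n d (j + m) - beta n d j).
Proof.
move=> Hd Hc; have [_ [_ [Hs Hm]]] := Hd.
apply: int_ind3.
- rewrite (d_sd' _ _ Hd Hc _ _ ec_one); apply: shiftdiag_ext => // k.
  by rewrite (beta_F1 _ _ Hd Hc _ ec_one) /one !subrr mulr0 addr0 subrr.
- move=> m IH.
  have e : shiftdiag (m + 1) one = mulm (shiftdiag m one) (shiftdiag 1 one).
    by rewrite mulm_sd; apply: shiftdiag_ext => // k; rewrite /one mulr1.
  rewrite e (Hm _ _ (calA_sd m _ ec_one) (calA_sd 1 _ ec_one)) IH.
  rewrite (d_sd' _ _ Hd Hc _ _ ec_one) !mulm_sd.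
  apply/funext=> i; apply/funext=> k; rewrite /addm !sd_eval /=.
  have -> : n + m + 1 = n + (m + 1) by ring.
  have -> : m + (n + 1) = n + (m + 1) by ring.
  case: ifP => _; last by rewrite addr0.
  rewrite (beta_F2 _ _ Hd Hc) /one; have -> : k + 1 + m = k + (m + 1) by ring.
  ring.
- move=> m IH.
  have e : shiftdiag (m - 1) one = mulm (shiftdiag m one) (shiftdiag (-1) one).
    by rewrite mulm_sd; apply: shiftdiag_ext => // k; rewrite /one mulr1.
  rewrite e (Hm _ _ (calA_sd m _ ec_one) (calA_sd (-1) _ ec_one)) IH.
  rewrite (d_sd' _ _ Hd Hc _ _ ec_one) !mulm_sd.
  apply/funext=> i; apply/funext=> k; rewrite /addm !sd_eval /=.
  have -> : n + m - 1 = n + (m - 1) by ring.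
  have -> : m + (n - 1) = n + (m - 1) by ring.
  case: ifP => _; last by rewrite addr0.
  rewrite (F3 _ _ Hd Hc) (beta_F2 _ _ Hd Hc) /one subrK.
  have -> : k - 1 + m = k + (m - 1) by ring.
  ring.
Qed.

Lemma commm_sd b n m a : commm (shiftdiag n b) (shiftdiag m a) =
  shiftdiag (n + m) (fun k => b (k + m) * a k - a (k + n) * b k).
Proof.
rewrite /commm !mulm_sd; apply/funext=> i; apply/funext=> k.
by rewrite /subm !sd_eval (addrC m n); case: ifP => _; rewrite ?subrr.
Qed.

Lemma d_gen n d : is_derivation d -> n_covariant n d ->
  forall m a, eventually_const a ->
  d (shiftdiag m a) = commm (shiftdiag n (beta n d)) (shiftdiag m a).
Proof.
move=> Hd Hc m a ha; have [_ [_ [Hs Hm]]] := Hd.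
have e : shiftdiag m a = mulm (shiftdiag m one) (shiftdiag 0 a).
  rewrite mulm_sd; apply: shiftdiag_ext => [|k]; first by rewrite addP0.
  by rewrite /one mul1r.
rewrite {1}e (Hm _ _ (calA_sd m _ ec_one) (calA_sd 0 _ ha)) (dU _ _ Hd Hc).
rewrite (d_sd' _ _ Hd Hc _ _ ha) !mulm_sd commm_sd.
apply/funext=> i; apply/funext=> k; rewrite /addm !sd_eval /= !addP0 (addrC m n).
case: ifP => _; last by rewrite addr0.
rewrite (beta_F1 _ _ Hd Hc _ ha) /one; ring.
Qed.

Lemma commm_addr b n A B : commm (shiftdiag n b) (addm A B) =
  addm (commm (shiftdiag n b) A) (commm (shiftdiag n b) B).
Proof.
apply/funext=> i; apply/funext=> j.
rewrite /commm /subm /addm !mulm_sdl !mulm_sdr /addm; ring.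
Qed.

Lemma d_calA n d : is_derivation d -> n_covariant n d ->
  forall a, in_calA a -> d a = commm (shiftdiag n (beta n d)) a.
Proof.
move=> Hd Hc; have [_ [Hadd [Hs Hm]]] := Hd.
move=> _ [s [hs ->]]; elim: s hs => [|p s IH] /=.
  move=> _.
  have z : polym [::] = scalem 0 (polym [::]).
    by apply/funext=> i; apply/funext=> j; rewrite /polym big_nil /scalem mul0r.
  rewrite {1}z Hs; last by exists [::].
  apply/funext=> i; apply/funext=> j.
  by rewrite /scalem mul0r /commm /subm mulm_sdl mulm_sdr /polym !big_nil mulr0 mul0r subrr.
case/andP => /asboolP hp hs.
have e : polym (p :: s) = addm (shiftdiag p.1 p.2) (polym s).
  by apply/funext=> i; apply/funext=> j; rewrite /polym big_cons.
rewrite e Hadd; first last.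
- by exists s.
- exact: calA_sd.
by rewrite commm_addr (IH hs) (d_gen _ _ Hd Hc _ _ hp).
Qed.

Lemma uniq_part n d : is_derivation d -> n_covariant n d ->
  forall beta' : int -> C,
  (forall a, in_calA a -> d a = commm (shiftdiag n beta') a) ->
  if n != 0 then beta' = beta n d
  else exists c : C, forall k, beta' k = beta n d k + c.
Proof.
move=> Hd Hc b' H.
have E : forall m a, eventually_const a ->
    commm (shiftdiag n b') (shiftdiag m a) = commm (shiftdiag n (beta n d)) (shiftdiag m a).
  by move=> m a ha; rewrite -H ?(d_gen _ _ Hd Hc _ _ ha) //; exact: calA_sd.
case: (eqVneq n 0) => [n0|n0] /=.
  subst n.
  have st : forall k, b' (k + 1) - b' k = beta 0 d (k + 1) - beta 0 d k.
    move=> k; have := congr1 (fun M => M (k + (0 + 1)) k) (E 1 one ec_one).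
    by rewrite !commm_sd !sd_at /one !mulr1 !mul1r.
  exists (b' 0 - beta 0 d 0); apply: int_ind3.
  - ring.
  - move=> m IH; have := st m; rewrite IH => h.
    have -> : b' (m + 1) = b' (m + 1) - (beta 0 d m + (b' 0 - beta 0 d 0)) + (beta 0 d m + (b' 0 - beta 0 d 0)) by ring.
    rewrite h; ring.
  - move=> m IH; have := st (m - 1); rewrite subrK IH => h.
    have -> : b' (m - 1) = beta 0 d m + (b' 0 - beta 0 d 0) - (beta 0 d m + (b' 0 - beta 0 d 0) - b' (m - 1)) by ring.
    rewrite h; ring.
apply/funext => j.
have := congr1 (fun M => M (j + (n + 0)) j) (E 0 (delta j) (ec_delta j)).
rewrite !commm_sd !sd_at /delta !addP0 eqxx.
have -> : (j + n == j) = false.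
  by apply/negbTE/eqP => e; move/eqP: n0; apply; lia.
by rewrite /= !mulr1 !mul0r !subr0.
Qed.

Theorem mainTheorem9 (n : int) (d : mat -> mat) :
  is_derivation d -> n_covariant n d ->
  exists beta : int -> C,
    [/\ conv_increments beta,
        (forall a, in_calA a -> d a = commm (shiftdiag n beta) a) &
        (forall beta' : int -> C, conv_increments beta' ->
           (forall a, in_calA a -> d a = commm (shiftdiag n beta') a) ->
           if n != 0 then beta' = beta
           else exists c : C, forall k, beta' k = beta k + c)].
Proof.
move=> Hd Hc; exists (beta n d); split.
- rewrite /conv_increments.
  have -> : (fun k => beta n d k - beta n d (k - 1)) = fun k => dc n d 1 one (k - 1).
    by apply/funext => k; rewrite (beta_F2 _ _ Hd Hc) subrK.
  apply: has_limits_shift; apply: (@inA_limits (n + 1)).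
  rewrite -(d_sd' _ _ Hd Hc _ _ ec_one); apply: (proj1 Hd); exact: (calA_sd 1 _ ec_one).
- exact: d_calA.
- by move=> b' _ H; apply: uniq_part.
Qed.
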